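(* Let $\mathcal{C}$ be an isoclinism class of finite-dimensional Lie superalgebras (over a field of characteristic different from $2,3$). Then every $L\in\mathcal{C}$ can be expressed as a direct sum $L=T\oplus A$, where $T$ is a stem Lie superalgebra and $A$ is a finite-dimensional abelian Lie superalgebra.
   Context: Lie superalgebras: $\mathbb{Z}_2$-graded algebras with graded skew-symmetric bracket satisfying the graded Jacobi identity; homomorphisms are even. $Z(L)$ is the center, $L'=[L,L]$; $L$ is stem if $Z(L)\subseteq L'$; abelian means $[L,L]=0$. Two Lie superalgebras $L,M$ are isoclinic if there are isomorphisms $\varphi:L/Z(L)\to M/Z(M)$, $\theta:L'\to M'$ with $\theta([l,m])=[k,r]$ whenever $k+Z(M)=\varphi(l+Z(L))$, $r+Z(M)=\varphi(m+Z(L))$; isoclinism is an equivalence relation whose classes are the isoclinism classes (families). *)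

(* Defs.v *)
(* A finite-dimensional Lie superalgebra over a field F is
   modelled as a finite-dimensional F-vector space V (vectType), together with
   a Z_2-grading V = V0 (+) V1 (two subspaces) and a bracket br : V -> V -> V
   that is bilinear, even (respects the grading), graded skew-symmetric and
   satisfies the graded Jacobi identity.  Parities are booleans
   (false = even, true = odd); addition of parities is xor. *)
From HB Require Import structures.
From mathcomp Require Import all_boot all_order all_algebra.
Set Implicit Arguments.
Unset Strict Implicit.
Unset Printing Implicit Defensive.
Import GRing.Theory.
Local Open Scope ring_scope.

Section LieSuper.
Variables (F : fieldType) (V : vectType F).

Definition hcomp (V0 V1 : {vspace V}) (b : bool) : {vspace V} :=
  if b then V1 else V0.

Definition psign (i j : bool) : F := (-1) ^+ (i && j).

Definition is_lie_super (V0 V1 : {vspace V}) (br : V -> V -> V) : Prop :=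
  [/\
      (V0 + V1 = fullv)%VS /\ (V0 :&: V1 = 0)%VS,
      (forall (a : F) (x y z : V), br (a *: x + y) z = a *: br x z + br y z) /\
      (forall (a : F) (x y z : V), br x (a *: y + z) = a *: br x y + br x z),
      (forall (i j : bool) (x y : V), x \in hcomp V0 V1 i -> y \in hcomp V0 V1 j ->
          br x y \in hcomp V0 V1 (i (+) j)),
      (forall (i j : bool) (x y : V), x \in hcomp V0 V1 i -> y \in hcomp V0 V1 j ->
          br x y = - (psign i j *: br y x)) &
      (forall (i j k : bool) (x y z : V),
          x \in hcomp V0 V1 i -> y \in hcomp V0 V1 j -> z \in hcomp V0 V1 k ->
          psign i k *: br x (br y z) + psign j i *: br y (br z x)
            + psign k j *: br z (br x y) = 0)].

Definition graded_subspace (V0 V1 W : {vspace V}) : Prop :=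
  (W = (W :&: V0) + (W :&: V1))%VS.

Definition graded_ideal (V0 V1 : {vspace V}) (br : V -> V -> V) (W : {vspace V}) : Prop :=
  graded_subspace V0 V1 W /\ (forall x y : V, y \in W -> br x y \in W).

Definition in_derived (br : V -> V -> V) (W : {vspace V}) (x : V) : Prop :=
  exists (n : nat) (a : 'I_n -> F) (u w : 'I_n -> V),
    (forall i, u i \in W /\ w i \in W) /\ x = \sum_(i < n) a i *: br (u i) (w i).

Definition in_center (br : V -> V -> V) (W : {vspace V}) (x : V) : Prop :=
  x \in W /\ (forall y : V, y \in W -> br x y = 0).

Definition stem (br : V -> V -> V) (W : {vspace V}) : Prop :=
  forall x : V, in_center br W x -> in_derived br W x.

Definition abelian_sub (br : V -> V -> V) (W : {vspace V}) : Prop :=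
  forall x y : V, x \in W -> y \in W -> br x y = 0.

End LieSuper.

(* Main.v *)
Require Import Defs.
From HB Require Import structures.
From mathcomp Require Import all_boot all_order all_algebra.
From Stdlib Require Import Classical.
Import GRing.Theory.
Local Open Scope ring_scope.

Lemma br0l {F : fieldType} {V : vectType F} {br : V -> V -> V}
  (HL : forall a x y z, br (a *: x + y) z = a *: br x z + br y z) z : br 0 z = 0.
Proof.
have H := HL 1 0 0 z; rewrite !scale1r !addr0 in H.
by apply: (@addrI _ (br 0 z)); rewrite addr0 -H.
Qed.

Lemma br0r {F : fieldType} {V : vectType F} {br : V -> V -> V}
  (HR : forall a x y z, br x (a *: y + z) = a *: br x y + br x z) z : br z 0 = 0.
Proof.
have H := HR 1 z 0 0; rewrite !scale1r !addr0 in H.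
by apply: (@addrI _ (br z 0)); rewrite addr0 -H.
Qed.

Lemma brsumL {F : fieldType} {V : vectType F} {br : V -> V -> V}
  (HL : forall a x y z, br (a *: x + y) z = a *: br x z + br y z) n (a : 'I_n -> F) f w :
  br (\sum_(i < n) a i *: f i) w = \sum_(i < n) a i *: br (f i) w.
Proof.
elim: n a f => [|n IH] a f; first by rewrite !big_ord0 (br0l HL).
by rewrite !big_ord_recr /= addrC HL IH addrC.
Qed.

Lemma brsumR {F : fieldType} {V : vectType F} {br : V -> V -> V}
  (HR : forall a x y z, br x (a *: y + z) = a *: br x y + br x z) n (a : 'I_n -> F) f w :
  br w (\sum_(i < n) a i *: f i) = \sum_(i < n) a i *: br w (f i).
Proof.
elim: n a f => [|n IH] a f; first by rewrite !big_ord0 (br0r HR).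
by rewrite !big_ord_recr /= addrC HR IH addrC.
Qed.

Definition brs (F : fieldType) (V : vectType F) (br : V -> V -> V) (s : seq V) : seq V :=
  [seq br p.1 p.2 | p <- [seq (x, y) | x <- s, y <- s]].

Lemma fact1 {F : fieldType} {V : vectType F} {br : V -> V -> V}
  (HL : forall a x y z, br (a *: x + y) z = a *: br x z + br y z)
  (HR : forall a x y z, br x (a *: y + z) = a *: br x y + br x z) (s : seq V) u w :
  u \in <<s>>%VS -> w \in <<s>>%VS -> br u w \in <<brs _ _ br s>>%VS.
Proof.
move=> Hu Hw.
rewrite (coord_span (Hu : u \in <<in_tuple s>>%VS)) (brsumL HL).
apply: memv_suml => i _; apply: memvZ.
rewrite (coord_span (Hw : w \in <<in_tuple s>>%VS)) (brsumR HR).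
apply: memv_suml => j _; apply: memvZ.
apply: memv_span; apply/mapP; exists ((in_tuple s)`_i, (in_tuple s)`_j) => //.
by apply: allpairs_f; apply: mem_nth.
Qed.

Lemma vspace_of_pred (F : fieldType) (V : vectType F) (P : V -> Prop) :
  P 0 -> (forall a x y, P x -> P y -> P (a *: x + y)) ->
  exists W : {vspace V}, forall x, x \in W <-> P x.
Proof.
move=> P0 PC.
have PD x y : P x -> P y -> P (x + y) by move=> ? ?; rewrite -[x]scale1r; apply: PC.
have PZ a x : P x -> P (a *: x) by move=> ?; rewrite -[_ *: _]addr0; apply: PC.
have key (k : nat) : exists U : {vspace V}, (forall x, x \in U -> P x) /\
    ((k <= \dim U)%N \/ forall x, P x -> x \in U).
  elim: k => [|k [U [HU [Hk|Hall]]]].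
  - by exists 0%VS; split; [move=> x; rewrite memv0 => /eqP ->| left].
  - case: (classic (forall x, P x -> x \in U)) => [Hall|].
      by exists U; split => //; right.
    move=> /not_all_ex_not [x Hx].
    have [Px nUx] : P x /\ x \notin U.
      by split; [apply: NNPP => H; apply: Hx|apply/negP => H; apply: Hx].
    exists (U + <[x]>)%VS; split.
      move=> y /memv_addP [u Hu [v /vlineP [c ->] ->]].
      by rewrite addrC; apply: PC => //; apply: HU.
    left; have := dimv_leqif_eq (addvSl U <[x]>).
    move=> /leqifP; case: eqP => [E|_ Hlt].
      by exfalso; apply: (negP nUx); rewrite E; apply/memv_addP; exists 0; [exact: mem0v| exists x; [exact: memv_line| by rewrite add0r]].
    exact: leq_ltn_trans Hk Hlt.
  - by exists U; split => //; right.
have [U [HU [Hk|Hall]]] := key (\dim (fullv : {vspace V})).+1.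
  by have := dimvS (subvf U); rewrite leqNgt Hk.
by exists U => x; split; [apply: HU|apply: Hall].
Qed.

Lemma graded_cap0 {F : fieldType} {V : vectType F} (V0 V1 X0 X1 Y0 Y1 : {vspace V}) :
  (V0 :&: V1 = 0)%VS -> (X0 <= V0)%VS -> (X1 <= V1)%VS -> (Y0 <= V0)%VS -> (Y1 <= V1)%VS ->
  (X0 :&: Y0 = 0)%VS -> (X1 :&: Y1 = 0)%VS -> ((X0 + X1) :&: (Y0 + Y1) = 0)%VS.
Proof.
move=> Hc sX0 sX1 sY0 sY1 H0 H1; apply/eqP; rewrite -subv0; apply/subvP => x.
move=> /memv_capP [/memv_addP [x0 Hx0 [x1 Hx1 ->]] /memv_addP [y0 Hy0 [y1 Hy1 E]]].
have E0 : x0 - y0 = y1 - x1 by apply/eqP; rewrite subr_eq addrAC [y1 + y0]addrC -E addrK.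
have ex0 : x0 = y0.
  apply/eqP; rewrite -subr_eq0 -memv0 -Hc.
  rewrite memv_cap; apply/andP; split; first by apply: memvB; [apply: (subvP sX0)|apply: (subvP sY0)].
  by rewrite E0; apply: memvB; [apply: (subvP sY1)|apply: (subvP sX1)].
have ex0' : x0 = 0.
  by apply/eqP; rewrite -memv0 -H0 memv_cap Hx0 ex0 Hy0.
move: E0; rewrite ex0 subrr => /eqP; rewrite eq_sym subr_eq0 => /eqP ex1.
have ex1' : x1 = 0.
  by apply/eqP; rewrite -memv0 -H1 memv_cap Hx1 -ex1 Hy1.
by rewrite ex1' -ex0 ex0' addr0 mem0v.
Qed.

Lemma graded_sum {F : fieldType} {V : vectType F} (V0 V1 X0 X1 : {vspace V}) :
  (X0 <= V0)%VS -> (X1 <= V1)%VS -> graded_subspace V0 V1 (X0 + X1)%VS.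
Proof.
move=> s0 s1; apply/eqP; rewrite eqEsubv; apply/andP; split.
  by apply: addvS; rewrite subv_cap ?addvSl ?addvSr ?s0 ?s1.
by rewrite subv_add !capvSl.
Qed.

Theorem theorem3p7 (F : fieldType) (V : vectType F) (V0 V1 : {vspace V})
    (br : V -> V -> V) :
  (2%:R : F) != 0 -> (3%:R : F) != 0 ->
  is_lie_super V0 V1 br ->
  exists T A : {vspace V},
    [/\ graded_ideal V0 V1 br T, graded_ideal V0 V1 br A,
        (T + A = fullv)%VS, (T :&: A = 0)%VS &
        stem br T /\ abelian_sub br A].
Proof.
move=> _ _ [[Hsum Hcap] [HL HR] Hev Hskew _].
pose Vb b := hcomp V0 V1 b.
have brDl x y z : br (x + y) z = br x z + br y z by have := HL 1 x y z; rewrite !scale1r.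
have brDr x y z : br z (x + y) = br z x + br z y by have := HR 1 z x y; rewrite !scale1r.
have dec x : exists x0, exists x1, [/\ x0 \in V0, x1 \in V1 & x = x0 + x1].
  have : x \in (V0 + V1)%VS by rewrite Hsum memvf.
  by move=> /memv_addP [x0 H0 [x1 H1 ->]]; exists x0, x1.
have hz x : x \in V0 -> x \in V1 -> x = 0.
  by move=> h0 h1; apply/eqP; rewrite -memv0 -Hcap memv_cap h0 h1.
have Vbsub b : (Vb b <= V0 + V1)%VS by rewrite Hsum subvf.
pose e := vbasis V0 ++ vbasis V1.
have He : <<e>>%VS = fullv by rewrite span_cat !(span_basis (vbasisP _)) Hsum.
pose D := <<brs _ _ br e>>%VS.
have HD u w : br u w \in D by apply: fact1 => //; rewrite He memvf.
have [Z HZ] : exists Z : {vspace V}, forall x, x \in Z <-> (forall y, br x y = 0).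
  apply: vspace_of_pred; first by move=> y; apply: br0l HL y.
  by move=> a x y Px Py z; rewrite HL Px Py scaler0 addr0.
have hz' j v : v \in Vb j -> v \in Vb (~~ j) -> v = 0.
  by case: j => /= h1 h2; [apply: hz h2 h1|apply: hz h1 h2].
have Zgr x : x \in Z -> exists x0, exists x1,
    [/\ x0 \in (Z :&: V0)%VS, x1 \in (Z :&: V1)%VS & x = x0 + x1].
  move=> /HZ Zx; have [x0 [x1 [H0 H1 Ex]]] := dec x.
  have Zx0 : x0 \in Z.
    apply/HZ => y; have [y0 [y1 [Hy0 Hy1 ->]]] := dec y.
    have key j w : w \in Vb j -> br x0 w = 0.
      move=> Hw; apply: (hz' j).
        by have := Hev false j x0 w H0 Hw.
      have -> : br x0 w = - br x1 w.
        by apply/eqP; rewrite -addr_eq0 -brDl -Ex Zx.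
      by rewrite memvN; have := Hev true j x1 w H1 Hw.
    by rewrite brDr (key false) // (key true) // addr0.
  exists x0, x1; split; rewrite ?memv_cap ?Zx0 ?H0 ?H1 ?andbT //.
  have -> : x1 = x - x0 by rewrite Ex addrC addKr.
  by rewrite memvB //; apply/(proj2 (HZ x)).
have Zr x y : x \in Z -> br y x = 0.
  move=> /Zgr [x0 [x1 [H0 H1 ->]]]; have [y0 [y1 [Hy0 Hy1 ->]]] := dec y.
  move: H0 H1; rewrite !memv_cap => /andP [Z0 X0] /andP [Z1 X1].
  have key i j a b : a \in Vb i -> b \in Vb j -> b \in Z -> br a b = 0.
    by move=> Ha Hb Zb; rewrite (Hskew i j a b Ha Hb) (proj1 (HZ b) Zb) scaler0 oppr0.
  by rewrite !brDl !brDr (key false false) // (key false true) // (key true false) // (key true true) // !addr0.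
pose Zb b := (Z :&: Vb b)%VS.
pose Db b := (D :&: Vb b)%VS.
pose Ab b := (Zb b :\: D)%VS.
pose Cb b := (Vb b :\: (Ab b + Db b))%VS.
pose Tb b := (Db b + Cb b)%VS.
pose A := (Ab false + Ab true)%VS.
pose T := (Tb false + Tb true)%VS.
have AbZ b : (Ab b <= Z)%VS.
  by apply: subv_trans (diffvSl _ _) _; apply: capvSl.
have AbV b : (Ab b <= Vb b)%VS.
  by apply: subv_trans (diffvSl _ _) _; apply: capvSr.
have DbV b : (Db b <= Vb b)%VS by apply: capvSr.
have CbV b : (Cb b <= Vb b)%VS by apply: diffvSl.
have TbV b : (Tb b <= Vb b)%VS by rewrite subv_add DbV CbV.
have AZ : (A <= Z)%VS by rewrite subv_add !AbZ.
have AD b : (Ab b :&: D = 0)%VS by apply: capv_diff.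
have DT : (D <= T)%VS.
  apply: (@subv_trans _ _ (Db false + Db true)%VS).
    apply/span_subvP => v /mapP [p /allpairsP [[u w] [/= Hu Hw ->]] ->] /=.
    have hom x : x \in e -> exists i, x \in Vb i.
      by rewrite mem_cat => /orP [h|h]; [exists false|exists true]; apply: vbasis_mem.
    have [i Hi] := hom u Hu; have [j Hj] := hom w Hw.
    have Hb := Hev i j u w Hi Hj.
    have HDb : br u w \in Db (i (+) j) by rewrite memv_cap HD.
    by case: (i (+) j) HDb => h; [apply: (subvP (addvSr _ _))|apply: (subvP (addvSl _ _))].
  by apply: addvS; apply: addvSl.
have TbT b : (Tb b <= T)%VS by case: b; [apply: addvSr|apply: addvSl].
have AbA b : (Ab b <= A)%VS by case: b; [apply: addvSr|apply: addvSl].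
have VbTA b : (Vb b <= T + A)%VS.
  have -> : Vb b = (Cb b + (Ab b + Db b))%VS.
    rewrite -{1}(addv_diff_cap (Vb b) (Ab b + Db b)).
    by congr (_ + _)%VS; apply/capv_idPr; rewrite subv_add AbV DbV.
  have TTA : (T <= T + A)%VS by apply: addvSl.
  have ATA : (A <= T + A)%VS by apply: addvSr.
  rewrite !subv_add; apply/and3P; split.
  - apply: (@subv_trans _ _ T) => //; apply: (@subv_trans _ _ (Tb b)) => //; apply: addvSr.
  - exact: (@subv_trans _ _ A).
  - apply: (@subv_trans _ _ T) => //; apply: (@subv_trans _ _ (Tb b)) => //; apply: addvSl.
have TAfull : (T + A = fullv)%VS.
  apply/eqP; rewrite eqEsubv subvf -Hsum subv_add.
  by rewrite (VbTA false) (VbTA true).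
have TbAb b : (Tb b :&: Ab b = 0)%VS.
  apply/eqP; rewrite -subv0; apply/subvP => x /memv_capP [/memv_addP [d Hd [c Hc Ex]] Hx].
  have c0 : c = 0.
    apply/eqP; rewrite -memv0 -(capv_diff (Vb b) (Ab b + Db b)) memv_cap Hc /=.
    have -> : c = x - d by rewrite Ex addrC addKr.
    by apply/memv_addP; exists x => //; exists (- d); rewrite ?memvN.
  move: Ex; rewrite c0 addr0 => Ex.
  by rewrite -(AD b) memv_cap Hx Ex (subvP (capvSl _ _) _ Hd).
have TA0 : (T :&: A = 0)%VS.
  exact: (graded_cap0 _ _ _ _ _ _ Hcap (TbV false) (TbV true) (AbV false) (AbV true) (TbAb false) (TbAb true)).
have ZAD x : x \in Z -> exists a, exists d, [/\ a \in A, d \in D & x = a + d].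
  move=> /Zgr [x0 [x1 [H0 H1 ->]]].
  have split b y : y \in Zb b -> exists a, exists d, [/\ a \in Ab b, d \in D & y = a + d].
    rewrite -(addv_diff_cap (Zb b) D) => /memv_addP [a Ha [d Hd ->]].
    by exists a, d; split => //; move: Hd; rewrite memv_cap => /andP [].
  have [a0 [d0 [Ha0 Hd0 ->]]] := split false x0 H0.
  have [a1 [d1 [Ha1 Hd1 ->]]] := split true x1 H1.
  exists (a0 + a1), (d0 + d1); split; last by rewrite addrACA.
    by apply/memv_addP; exists a0 => //; exists a1.
  exact: memvD.
have DTsub : (D <= <<brs _ _ br (vbasis T)>>)%VS.
  apply/span_subvP => v /mapP [p _ ->].
  have HT : (<<vbasis T>> = T)%VS by apply: span_basis (vbasisP T).
  have [t [Ht [a Ha ->]]] : exists t, t \in T /\ exists2 a, a \in A & p.1 = t + a.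
    by have := memvf p.1; rewrite -TAfull => /memv_addP [t Ht [a Ha ->]]; exists t; split => //; exists a.
  have [t' [Ht' [a' Ha' ->]]] : exists t, t \in T /\ exists2 a, a \in A & p.2 = t + a.
    by have := memvf p.2; rewrite -TAfull => /memv_addP [t0 Ht0 [b0 Hb0 ->]]; exists t0; split => //; exists b0.
  rewrite brDl (proj1 (HZ a) (subvP AZ a Ha)) addr0 brDr (Zr a' t (subvP AZ a' Ha')) addr0.
  by apply: fact1 => //; rewrite HT.
exists T, A; split => //.
- split; first by apply: graded_sum; [apply: (TbV false)|apply: (TbV true)].
  by move=> x y _; apply: (subvP DT); apply: HD.
- split; first by apply: graded_sum; [apply: (AbV false)|apply: (AbV true)].
  by move=> x y Hy; rewrite (Zr y x (subvP AZ y Hy)) mem0v.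
split; last first.
  by move=> x y Hx _; exact: (proj1 (HZ x) (subvP AZ x Hx) y).
move=> x [HxT Hc].
have xZ : x \in Z.
  apply/HZ => y; have := memvf y; rewrite -TAfull => /memv_addP [t Ht [a Ha ->]].
  by rewrite brDr (Hc t Ht) (Zr a x (subvP AZ a Ha)) addr0.
have xD : x \in D.
  have [a [d [Ha Hd Ex]]] := ZAD x xZ.
  have a0 : a = 0.
    apply/eqP; rewrite -memv0 -TA0 memv_cap Ha andbT.
    have -> : a = x - d by rewrite Ex addrK.
    by apply: memvB => //; apply: (subvP DT).
  by rewrite Ex a0 add0r.
have Hx : x \in <<in_tuple (brs _ _ br (vbasis T))>>%VS by apply: (subvP DTsub).
pose ps := [seq (u, w) | u <- vbasis T, w <- vbasis T].
exists (size (brs _ _ br (vbasis T))), (fun i => coord (in_tuple (brs _ _ br (vbasis T))) i x),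
  (fun i => (nth (0, 0) ps i).1), (fun i => (nth (0, 0) ps i).2).
have Hsz : size (brs _ _ br (vbasis T)) = size ps by rewrite size_map.
split.
  move=> i; have Hi : (i < size ps)%N by rewrite -Hsz.
  have := mem_nth (0, 0) Hi => /allpairsP [[u w] [/= Hu Hw ->]] /=.
  by split; apply: vbasis_mem.
rewrite {1}(coord_span Hx); apply: eq_bigr => i _; congr (_ *: _).
by rewrite /= (nth_map (0, 0)) // -Hsz.
Qed.
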